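(* Let $p\ge1$, $\sigma,B,R>0$, $S_0:=\{x\in\mathbb{R}^p:\|x\|\le B\}$, $\mu$ a probability measure on $S_0$, and $G^*$ a probability measure on $\{\beta:\|\beta\|\le R\}$. Let $\mathcal{G}$ be the class of functions $x\mapsto\frac12\mathfrak{H}^2(f^G_x,f^{G^*}_x)$ on $S_0$, as $G$ ranges over all probability measures on $\{\beta\in\mathbb{R}^p:\|\beta\|\le R\}$, and let $T_{G^*}:=\int\big(\int\sqrt{f^{G^*}_x(y)}\,dy\big)^2d\mu(x)$ (assumed finite). Then for every $\epsilon>0$, $$N_{[]}(\epsilon,\mathcal{G},L_2(\mu))\le N\Big(\frac{\epsilon^2}{4T_{G^*}},\mathcal{M}_R,\|\cdot\|_\infty\Big).$$
   Context: $\phi$ is the standard normal density; $f^G_x(y):=\int\frac1\sigma\phi\big(\frac{y-x^\top\beta}{\sigma}\big)\,dG(\beta)$; $\mathfrak{H}^2(f,g)=\int(\sqrt f-\sqrt g)^2dy$. $\mathcal{M}_R:=\{(x,y)\mapsto f^G_x(y):G\text{ a probability measure supported on }\{\beta:\|\beta\|\le R\}\}$, and $\|\cdot\|_\infty$ is the pseudometric $(f^G,f^{G'})\mapsto\sup_{x\in S_0,y\in\mathbb{R}}|f^G_x(y)-f^{G'}_x(y)|$; $N(\eta,T,\mathfrak{d})$ is the smallest cardinality of an $\eta$-cover of $T$ under $\mathfrak{d}$. $N_{[]}(\epsilon,\mathcal{G},L_2(\mu))$ is the $\epsilon$-bracketing number: the smallest number of pairs of functions $(g^L_j,g^U_j)$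 with $\|g^U_j-g^L_j\|_{L_2(\mu)}\le\epsilon$ such that every $g\in\mathcal{G}$ satisfies $g^L_j\le g\le g^U_j$ for some $j$. *)

(* Defs.v *)
(* R^p is modelled as [p.-tuple R], which carries the
   product (= Borel) sigma-algebra [measure_tuple_display] in MathComp-Analysis. *)
From HB Require Import structures.
From mathcomp Require Import all_boot all_order all_algebra.
From mathcomp Require Import all_classical all_reals all_analysis.
Set Implicit Arguments. Unset Strict Implicit. Unset Printing Implicit Defensive.
Import Order.TTheory GRing.Theory Num.Theory.
Import numFieldNormedType.Exports.
Local Open Scope classical_set_scope.
Local Open Scope ring_scope.

Section defs.
Variables (R : realType) (p : nat).

Definition phi (t : R) : R := normal_pdf 0 1 t.

Definition dotp (x b : p.-tuple R) : R := \sum_(i < p) tnth x i * tnth b i.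
Definition enorm (x : p.-tuple R) : R := Num.sqrt (\sum_(i < p) tnth x i ^+ 2).

Definition cball (r : R) : set (p.-tuple R) := [set b | enorm b <= r].

Definition supported_on (G : probability (p.-tuple R) R) (A : set (p.-tuple R)) :=
  G (~` A) = 0%E.

Definition fmix (sigma : R) (G : probability (p.-tuple R) R)
  (x : p.-tuple R) (y : R) : R :=
  fine (\int[G]_b ((sigma^-1 * phi ((y - dotp x b) / sigma))%:E)).

Definition hellinger2 (f g : R -> R) : \bar R :=
  (\int[lebesgue_measure]_y (((Num.sqrt (f y) - Num.sqrt (g y)) ^+ 2)%:E))%E.

Definition Hclass (sigma r : R) (Gs : probability (p.-tuple R) R)
  : set (p.-tuple R -> R) :=
  [set g | exists G : probability (p.-tuple R) R, supported_on G (cball r) /\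
     g = (fun x => fine (hellinger2 (fmix sigma G x) (fmix sigma Gs x)) / 2)].

Definition Mclass (sigma r : R) : set (p.-tuple R -> R -> R) :=
  [set f | exists G : probability (p.-tuple R) R, supported_on G (cball r) /\
     f = fmix sigma G].

Definition supdist (S0 : set (p.-tuple R)) (f g : p.-tuple R -> R -> R) : \bar R :=
  ereal_sup [set (`|f x y - g x y|)%:E | x in S0 & y in [set: R]].

(* covering number N(eta, T, d): smallest cardinality of an eta-cover of T
   (centres in T), as an extended real (+oo if no finite cover exists) *)
Definition covering_number (F : Type) (T : set F) (d : F -> F -> \bar R) (eta : R)
  : \bar R :=
  ereal_inf [set (n%:R)%:E | n in [set n : nat | exists c : 'I_n -> F,
     (forall j, T (c j)) /\ (forall f, T f -> exists j, (d f (c j) <= eta%:E)%E)]].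

Definition bracketing_number (mu : probability (p.-tuple R) R)
  (S0 : set (p.-tuple R)) (Gc : set (p.-tuple R -> R)) (eps : R) : \bar R :=
  ereal_inf [set (n%:R)%:E | n in [set n : nat |
     exists gL gU : 'I_n -> p.-tuple R -> R,
     (forall j, measurable_fun setT (gL j) /\ measurable_fun setT (gU j) /\
        (\int[mu]_x (((gU j x - gL j x) ^+ 2)%:E) <= (eps ^+ 2)%:E)%E) /\
     (forall g, Gc g -> exists j, forall x, S0 x -> gL j x <= g x <= gU j x)]].

Definition TG (sigma : R) (mu : probability (p.-tuple R) R)
  (Gs : probability (p.-tuple R) R) : \bar R :=
  (\int[mu]_x (let I := \int[lebesgue_measure]_y ((Num.sqrt (fmix sigma Gs x y))%:E)
               in I * I))%E.

End defs.

(* Main.v *)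
Require Import Defs.
From HB Require Import structures.
From mathcomp Require Import all_boot all_order all_algebra.
From mathcomp Require Import all_classical all_reals all_analysis.
From mathcomp Require Import measurable_realfun ring lra.
Import Order.TTheory GRing.Theory Num.Theory.
Local Open Scope classical_set_scope.
Local Open Scope ring_scope.
Set Implicit Arguments. Unset Strict Implicit.

Lemma kerE (R : realType) (s m y : R) : 0 < s ->
  s^-1 * phi ((y - m) / s) = normal_pdf m s y.
Proof.
move=> s0.
rewrite /phi /normal_pdf oner_eq0 gt_eqF //= /normal_peak /normal_fun.
rewrite mulrA; congr (_ * expR _); last first.
  rewrite subr0 expr1n; field; rewrite gt_eqF //.
have hp : 0 < pi :> R by exact: pi_gt0.
rewrite -invrM ?unitfE ?gt_eqF ?sqrtr_gt0 ?expr1n ?mul1r ?mulrn_wgt0 //.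
congr (_^-1).
rewrite mulrC -mulrnAr sqrtrM ?sqr_ge0 // sqrtr_sqr gtr0_norm //.
by rewrite -pihalfE divr_gt0.
Qed.

Ltac mtac := solve [ exact: measurable_fst | exact: measurable_snd
  | exact: (measurableT_comp measurable_fst measurable_fst)
  | exact: (measurableT_comp measurable_snd measurable_fst)
  | exact: measurable_cst | exact: measurable_id ].

Section Kernel.
Variables (R : realType) (p : nat).
Local Notation T := (p.-tuple R).

Lemma mdotp d (X : measurableType d) (u v : X -> T) :
  measurable_fun setT u -> measurable_fun setT v ->
  measurable_fun setT (fun z => dotp (u z) (v z)).
Proof.
move=> mu mv; rewrite /dotp; apply: measurable_sum => i.
apply: measurable_funM.
- exact: (measurableT_comp (measurable_tnth i) mu).
- exact: (measurableT_comp (measurable_tnth i) mv).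
Qed.

Lemma normal_pdf_shift (s m y : R) : normal_pdf m s y = normal_pdf 0 s (y - m) \/ s = 0.
Proof.
have [->|s0] := eqVneq s 0; first by right.
by left; rewrite /normal_pdf (negbTE s0) /normal_fun subr0.
Qed.

Lemma mker (s : R) d (X : measurableType d) (u v : X -> T) (w : X -> R) :
  0 < s -> measurable_fun setT u -> measurable_fun setT v -> measurable_fun setT w ->
  measurable_fun setT (fun z => normal_pdf (dotp (u z) (v z)) s (w z)).
Proof.
move=> s0 mu mv mw.
have -> : (fun z => normal_pdf (dotp (u z) (v z)) s (w z)) =
          (fun z => normal_pdf 0 s (w z - dotp (u z) (v z))).
  apply/funext => z; case: (normal_pdf_shift s (dotp (u z) (v z)) (w z)) => //.
  by move=> s00; move: s0; rewrite s00 ltxx.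
apply: (measurableT_comp (measurable_normal_pdf 0 s)).
by apply: measurable_funB => //; exact: mdotp.
Qed.

Definition kk (s : R) (x : T) (y : R) (b : T) := normal_pdf (dotp x b) s y.

Variables (s : R) (s0 : 0 < s) (G : probability T R).

Lemma fmixE x y : fmix s G x y = fine (\int[G]_b (kk s x y b)%:E)%E.
Proof.
rewrite /fmix; congr fine; apply: eq_integral => b _.
by rewrite /kk -kerE.
Qed.

Lemma mkk_b x y : measurable_fun setT (kk s x y).
Proof. by apply: mker => //; exact: measurable_cst. Qed.

Lemma int_kk_ge0 x y : (0 <= \int[G]_b (kk s x y b)%:E)%E.
Proof. by apply: integral_ge0 => b _; rewrite lee_fin normal_pdf_ge0. Qed.

Lemma int_kk_fin x y : (\int[G]_b (kk s x y b)%:E)%E \is a fin_num.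
Proof.
rewrite ge0_fin_numE ?int_kk_ge0 //.
apply: (@le_lt_trans _ _ (\int[G]_b (cst (normal_peak s)%:E) b)%E).
  apply: ge0_le_integral => //.
  - by move=> b _; rewrite lee_fin normal_pdf_ge0.
  - by apply/measurable_EFinP; exact: mkk_b.
  - by move=> b _; rewrite lee_fin normal_pdf_ub // gt_eqF.
rewrite integral_cst // (_ : _ [set: _] = 1%E) ?mule1 ?ltry //; exact: probability_setT.
Qed.

Lemma fmixEE x y : ((fmix s G x y)%:E = \int[G]_b (kk s x y b)%:E)%E.
Proof. by rewrite fmixE fineK // int_kk_fin. Qed.

Lemma fmix_ge0 x y : 0 <= fmix s G x y.
Proof. by rewrite fmixE fine_ge0 // int_kk_ge0. Qed.

Lemma mfmix_joint : measurable_fun setT (fun z : T * R => fmix s G z.1 z.2).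
Proof.
have -> : (fun z : T * R => fmix s G z.1 z.2) =
  fine \o fubini_F G (fun zb : (T * R) * T => (kk s zb.1.1 zb.1.2 zb.2)%:E).
  by apply/funext => z; rewrite /= fmixE.
apply: (measurableT_comp (fine_measurable measurableT)).
apply: measurable_fun_fubini_tonelli_F.
  apply: (@measurableT_comp _ _ _ _ _ _ EFin) => //; apply: mker => //; mtac.
by move=> z; rewrite lee_fin normal_pdf_ge0.
Qed.

Lemma mfmix_y x : measurable_fun setT (fmix s G x).
Proof. exact: (measurable_fun_pair2 x mfmix_joint). Qed.

Lemma fmix_int1 x : (\int[lebesgue_measure]_y (fmix s G x y)%:E = 1)%E.
Proof.
under eq_integral do rewrite fmixEE.
have h := @fubini_tonelli _ _ _ _ R lebesgue_measure G
  (fun yb : R * T => (kk s x yb.1 yb.2)%:E).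
rewrite /= in h; rewrite h; last 2 first.
  apply: (@measurableT_comp _ _ _ _ _ _ EFin) => //; apply: mker => //; mtac.
  by move=> z; rewrite lee_fin normal_pdf_ge0.
under eq_integral do rewrite /kk integral_normal_pdf.
by rewrite integral_cst // (_ : _ [set: _] = 1%E) ?mule1 //; exact: probability_setT.
Qed.

End Kernel.

Lemma msqrt (R : realType) : measurable_fun setT (fun r : R => Num.sqrt r).
Proof. exact: continuous_measurable_fun (@sqrt_continuous R). Qed.

Section Main.
Variables (R : realType) (p : nat) (s : R) (s0 : 0 < s)
  (Gs : probability (p.-tuple R) R).
Local Notation T := (p.-tuple R).

Definition Hel (G : probability T R) (x : T) : \bar R :=
  hellinger2 (fmix s G x) (fmix s Gs x).
Definition II (x : T) : \bar R :=
  (\int[lebesgue_measure]_y (Num.sqrt (fmix s Gs x y))%:E)%E.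

Lemma Hel_ge0 G x : (0 <= Hel G x)%E.
Proof. by apply: integral_ge0 => y _; rewrite lee_fin sqr_ge0. Qed.

Lemma II_ge0 x : (0 <= II x)%E.
Proof. by apply: integral_ge0 => y _; rewrite lee_fin sqrtr_ge0. Qed.

Lemma my_sq (G G' : probability T R) x :
  measurable_fun setT
    (fun y => ((Num.sqrt (fmix s G x y) - Num.sqrt (fmix s G' x y)) ^+ 2)%:E).
Proof.
apply: (@measurableT_comp _ _ _ _ _ _ EFin) => //.
apply: measurable_funX; apply: measurable_funB.
- exact: (measurableT_comp (@msqrt R) (mfmix_y s0 G x)).
- exact: (measurableT_comp (@msqrt R) (mfmix_y s0 G' x)).
Qed.

Lemma my_f (G : probability T R) x :
  measurable_fun setT (fun y => (fmix s G x y)%:E).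
Proof.
apply: (@measurableT_comp _ _ _ _ _ _ EFin) => //; exact: mfmix_y.
Qed.

Lemma my_sqrt (G : probability T R) x :
  measurable_fun setT (fun y => (Num.sqrt (fmix s G x y))%:E).
Proof.
apply: (@measurableT_comp _ _ _ _ _ _ EFin) => //.
exact: (measurableT_comp (@msqrt R) (mfmix_y s0 G x)).
Qed.

Lemma Hel_le2 G x : (Hel G x <= 2%:E)%E.
Proof.
rewrite /Hel /hellinger2.
apply: (@le_trans _ _ (\int[lebesgue_measure]_y
   ((fmix s G x y)%:E + (fmix s Gs x y)%:E))%E).
  apply: ge0_le_integral => //.
  - by move=> y _; rewrite lee_fin sqr_ge0.
  - exact: my_sq.
  - by apply: emeasurable_funD; exact: my_f.
  move=> y _; rewrite -EFinD lee_fin.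
  have f0 := fmix_ge0 s0 G x y; have h0 := fmix_ge0 s0 Gs x y.
  have a0 := sqrtr_ge0 (fmix s G x y); have b0 := sqrtr_ge0 (fmix s Gs x y).
  rewrite sqrrB !sqr_sqrtr //.
  have : 0 <= Num.sqrt (fmix s G x y) * Num.sqrt (fmix s Gs x y) by exact: mulr_ge0.
  lra.
rewrite ge0_integralD //.
- by rewrite !fmix_int1 // -EFinD.
- by move=> y _; rewrite lee_fin fmix_ge0.
- exact: my_f.
- by move=> y _; rewrite lee_fin fmix_ge0.
- exact: my_f.
Qed.

Lemma Hel_fin G x : Hel G x \is a fin_num.
Proof.
rewrite ge0_fin_numE ?Hel_ge0 //.
by apply: (le_lt_trans (Hel_le2 G x)); rewrite ltry.
Qed.

Lemma sqrt_diff (a b e : R) : 0 <= a -> 0 <= b -> `|a - b| <= e ->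
  Num.sqrt b - Num.sqrt a <= Num.sqrt e.
Proof.
move=> a0 b0; rewrite ler_norml => /andP[h1 h2].
have e0 : 0 <= e by move: (normr_ge0 (a - b)); lra.
have ua := sqrtr_ge0 a; have ub := sqrtr_ge0 b; have ue := sqrtr_ge0 e.
have sa := sqr_sqrtr a0; have sb := sqr_sqrtr b0; have se := sqr_sqrtr e0.
move: sa sb se; rewrite !expr2 => sa sb se.
have [hle|hlt] := lerP (Num.sqrt b - Num.sqrt a) (Num.sqrt e); first by [].
exfalso.
have hpos : 0 < Num.sqrt b - Num.sqrt a by lra.
have q : (Num.sqrt b - Num.sqrt a) * (Num.sqrt b - Num.sqrt a) <=
         Num.sqrt b * Num.sqrt b - Num.sqrt a * Num.sqrt a.
  have := mulr_ge0 ua (ltW hpos); nra.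
have q2 : Num.sqrt e * Num.sqrt e < (Num.sqrt b - Num.sqrt a) * (Num.sqrt b - Num.sqrt a).
  by apply: (@le_lt_trans _ _ (Num.sqrt e * (Num.sqrt b - Num.sqrt a))); nra.
nra.
Qed.

Ltac side := first [ exact: my_sq | exact: my_f | exact: my_sqrt
  | (by apply: emeasurable_funD; [exact: my_sq|exact: my_f])
  | (by apply: emeasurable_funM => //; exact: my_sqrt)
  | (by apply: emeasurable_funD; [apply: emeasurable_funD; [exact: my_sq|exact: my_f]|
        apply: emeasurable_funM => //; exact: my_sqrt])
  | (by move=> ? _; rewrite lee_fin ?sqr_ge0 ?fmix_ge0 ?sqrtr_ge0)
  | (by move=> ? _; apply: adde_ge0; rewrite lee_fin ?sqr_ge0 ?fmix_ge0)
  | (by move=> ? _; apply: mule_ge0; rewrite lee_fin ?sqrtr_ge0 //;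
        apply: mulr_ge0 => //; exact: sqrtr_ge0) ].

Lemma Hel_step G G' x e : 0 <= e ->
  (forall y, `|fmix s G x y - fmix s G' x y| <= e) ->
  (Hel G x <= Hel G' x + (2 * Num.sqrt e)%:E * II x)%E.
Proof.
move=> e0 he.
have key : (Hel G x + 1 <= Hel G' x + 1 + (2 * Num.sqrt e)%:E * II x)%E.
  have L : (Hel G x + 1 = \int[lebesgue_measure]_y
      (((Num.sqrt (fmix s G x y) - Num.sqrt (fmix s Gs x y)) ^+ 2)%:E
       + (fmix s G' x y)%:E))%E.
    by rewrite ge0_integralD //; try side; rewrite fmix_int1.
  have Rr : (Hel G' x + 1 + (2 * Num.sqrt e)%:E * II x =
      \int[lebesgue_measure]_y
      (((Num.sqrt (fmix s G' x y) - Num.sqrt (fmix s Gs x y)) ^+ 2)%:E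
       + (fmix s G x y)%:E + (2 * Num.sqrt e)%:E * (Num.sqrt (fmix s Gs x y))%:E))%E.
    rewrite ge0_integralD //; try side.
    rewrite ge0_integralD //; try side.
    rewrite fmix_int1 // ge0_integralZl //; try side.
  rewrite L Rr; apply: ge0_le_integral => //; try side.
  move=> y _; rewrite -!EFinM -!EFinD lee_fin.
  have f0 := fmix_ge0 s0 G x y; have f'0 := fmix_ge0 s0 G' x y.
  have h0 := fmix_ge0 s0 Gs x y.
  have a0 := sqrtr_ge0 (fmix s G x y); have a'0 := sqrtr_ge0 (fmix s G' x y).
  have c0 := sqrtr_ge0 (fmix s Gs x y); have ee := sqrtr_ge0 e.
  have d := sqrt_diff f0 f'0 (he y).
  have sa := sqr_sqrtr f0; have sa' := sqr_sqrtr f'0.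
  move: sa sa'; rewrite !expr2 => sa sa'.
  have dd : 0 <= Num.sqrt e - (Num.sqrt (fmix s G' x y) - Num.sqrt (fmix s G x y)).
    by rewrite subr_ge0.
  have := mulr_ge0 c0 dd; nra.
move: key; rewrite (addeAC (Hel G' x)) leeD2rE //.
Qed.

Lemma mjoint_sqrt (G : probability T R) :
  measurable_fun setT (fun z : T * R => Num.sqrt (fmix s G z.1 z.2)).
Proof. exact: (measurableT_comp (@msqrt R) (mfmix_joint s0 G)). Qed.

Lemma mHel G : measurable_fun setT (Hel G).
Proof.
have -> : Hel G = fubini_F lebesgue_measure (fun z : T * R =>
   ((Num.sqrt (fmix s G z.1 z.2) - Num.sqrt (fmix s Gs z.1 z.2)) ^+ 2)%:E).
  by apply/funext => x.
apply: measurable_fun_fubini_tonelli_F.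
  apply: (@measurableT_comp _ _ _ _ _ _ EFin) => //.
  by apply: measurable_funX; apply: measurable_funB; exact: mjoint_sqrt.
by move=> z; rewrite lee_fin sqr_ge0.
Qed.

Lemma mII : measurable_fun setT II.
Proof.
have -> : II = fubini_F lebesgue_measure (fun z : T * R =>
   (Num.sqrt (fmix s Gs z.1 z.2))%:E).
  by apply/funext => x.
apply: measurable_fun_fubini_tonelli_F.
  apply: (@measurableT_comp _ _ _ _ _ _ EFin) => //; exact: mjoint_sqrt.
by move=> z; rewrite lee_fin sqrtr_ge0.
Qed.

Definition ww (e : R) (x : T) : R := fine (mine ((Num.sqrt e)%:E * II x)%E 1%E).

Lemma mww e : measurable_fun setT (ww e).
Proof.
apply: (measurableT_comp (fine_measurable measurableT)).
apply: measurable_mine; last exact: measurable_cst.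
by apply: emeasurable_funM => //; exact: mII.
Qed.

Lemma mine_ge0 e x : (0 <= mine ((Num.sqrt e)%:E * II x)%E 1%E)%E.
Proof.
rewrite le_min lee01 andbT; apply: mule_ge0; last exact: II_ge0.
by rewrite lee_fin sqrtr_ge0.
Qed.

Lemma mine_fin e x : mine ((Num.sqrt e)%:E * II x)%E 1%E \is a fin_num.
Proof.
rewrite ge0_fin_numE ?mine_ge0 //.
by apply: (@le_lt_trans _ _ 1%E); [rewrite ge_min lexx orbT | exact: ltry].
Qed.

Lemma bracket G G' x e : 0 <= e ->
  (forall y, `|fmix s G x y - fmix s G' x y| <= e) ->
  fine (Hel G x) / 2 <= fine (Hel G' x) / 2 + ww e x.
Proof.
move=> e0 he.
set m := mine ((Num.sqrt e)%:E * II x)%E 1%E.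
have H : (Hel G x <= Hel G' x + 2%:E * m)%E.
  case: (leP ((Num.sqrt e)%:E * II x)%E 1%E) => h.
  - rewrite /m min_l // muleA -EFinM; exact: Hel_step.
  - rewrite /m min_r; last exact: ltW.
    rewrite mule1.
    apply: (le_trans (Hel_le2 G x)).
    rewrite -[X in (X <= _)%E](add0e 2%:E); apply: leeD2r; exact: Hel_ge0.
have H' : ((fine (Hel G x))%:E <= (fine (Hel G' x))%:E + 2%:E * (ww e x)%:E)%E.
  by rewrite /ww !fineK // ?Hel_fin // mine_fin.
move: H'; rewrite -EFinM -EFinD lee_fin => H'.
lra.
Qed.

Lemma ww_bound e x : 0 <= e ->
  (((2 * ww e x) ^+ 2)%:E <= (4 * e)%:E * (II x * II x))%E.
Proof.
move=> e0.
have : II x \is a fin_num \/ II x = +oo%E.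
  by move: (II_ge0 x); case: (II x) => [r||] // _; [left | right].
have I0 := II_ge0 x.
case=> [hf|hoo].
- rewrite -(fineK hf) in I0 *.
  set r := fine (II x) in I0 *.
  rewrite -!EFinM lee_fin /ww (_ : II x = r%:E); last by rewrite /r fineK.
  rewrite -EFinM -EFin_min /=.
  rewrite lee_fin in I0.
  have se := sqr_sqrtr e0; have ee := sqrtr_ge0 e.
  set v := Num.min (Num.sqrt e * r) 1.
  have v0 : 0 <= v by rewrite /v le_min ler01 andbT mulr_ge0.
  have v1 : v <= Num.sqrt e * r by rewrite /v ge_min lexx.
  move: se; rewrite !expr2 => se.
  have : v * v <= (Num.sqrt e * r) * (Num.sqrt e * r) by nra.
  nra.
- rewrite hoo mulyy.
  have [->|ep] := eqVneq e 0.
    rewrite /ww hoo sqrtr0 mul0e min_l; last exact: lee01.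
    by rewrite /= mulr0 expr0n /= mulr0 mul0e.
  rewrite mulry gtr0_sg ?mul1e ?leey //.
  by rewrite mulr_gt0 // lt_def ep e0.
Qed.

End Main.

Theorem mainTheorem10 (R : realType) (p : nat) (sigma B r : R)
  (mu Gs : probability (p.-tuple R) R) :
  (1 <= p)%N -> 0 < sigma -> 0 < B -> 0 < r ->
  supported_on mu (cball B) ->
  supported_on Gs (cball r) ->
  (TG sigma mu Gs < +oo)%E ->
  forall eps : R, 0 < eps ->
  (bracketing_number mu (cball B) (Hclass sigma r Gs) eps <=
   covering_number (Mclass (p:=p) sigma r) (supdist (cball B))
     (eps ^+ 2 / (4 * fine (TG sigma mu Gs))))%E.
Proof.
move=> _ s0 _ _ _ _ TGfin eps eps0.
have TG0 : (0 <= TG sigma mu Gs)%E.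
  apply: integral_ge0 => x _ /=.
  by apply: mule_ge0; exact: (II_ge0 sigma Gs x).
set t := fine (TG sigma mu Gs).
have TGE : TG sigma mu Gs = t%:E by rewrite /t fineK // ge0_fin_numE.
have t0 : 0 <= t by rewrite /t fine_ge0.
set eta := eps ^+ 2 / (4 * t).
have eta0 : 0 <= eta by rewrite /eta divr_ge0 ?sqr_ge0 ?mulr_ge0.
have eta_t : 4 * eta * t <= eps ^+ 2.
  have [->|tn0] := eqVneq t 0; first by rewrite mulr0 sqr_ge0.
  suff -> : 4 * eta * t = eps ^+ 2 by [].
  rewrite /eta; field.
  exact: tn0.
rewrite /covering_number /bracketing_number.
apply: le_ereal_inf => _ [n [c [Mc cov]] <-]; exists n => //.
have : forall j, exists G : probability (p.-tuple R) R,
    supported_on G (cball r) /\ c j = fmix sigma G.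
  by move=> j; exact: Mc j.
case/choice => Gj HGj.
exists (fun j x => fine (Hel sigma Gs (Gj j) x) / 2 - ww sigma Gs eta x).
exists (fun j x => fine (Hel sigma Gs (Gj j) x) / 2 + ww sigma Gs eta x).
split.
  move=> j.
  have mg : measurable_fun setT (fun x => fine (Hel sigma Gs (Gj j) x) / 2).
    apply: measurable_funM; last exact: measurable_cst.
    exact: (measurableT_comp (fine_measurable measurableT) (mHel s0 Gs (Gj j))).
  split; first by apply: measurable_funB => //; exact: mww.
  split; first by apply: measurable_funD => //; exact: mww.
  apply: (@le_trans _ _ (\int[mu]_x ((4 * eta)%:E * (II sigma Gs x * II sigma Gs x)))%E).
    apply: ge0_le_integral => //.
    - by move=> x _; rewrite lee_fin sqr_ge0.
    - apply: (@measurableT_comp _ _ _ _ _ _ EFin) => //.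
      apply: measurable_funX; apply: measurable_funB.
      + by apply: measurable_funD => //; exact: mww.
      + by apply: measurable_funB => //; exact: mww.
    - apply: emeasurable_funM => //; apply: emeasurable_funM; exact: mII.
    move=> x _.
    rewrite (_ : _ - _ = 2 * ww sigma Gs eta x); last by ring.
    exact: ww_bound.
  rewrite ge0_integralZl //; first last.
  - by rewrite lee_fin mulr_ge0.
  - by move=> x _; apply: mule_ge0; exact: II_ge0.
  - by apply: emeasurable_funM; exact: mII.
  have -> : (\int[mu]_x (II sigma Gs x * II sigma Gs x))%E = TG sigma mu Gs by [].
  by rewrite TGE -EFinM lee_fin.
move=> g [G [HG ->]].
have [j hj] := cov (fmix sigma G) (ex_intro _ G (conj HG erefl)).
exists j => x hx.
have bd : forall y, `|fmix sigma G x y - fmix sigma (Gj j) x y| <= eta.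
  move=> y; rewrite -lee_fin; apply: le_trans hj.
  rewrite (HGj j).2; apply: ereal_sup_ubound.
  by exists x => //; exists y.
apply/andP; split.
- rewrite lerBlDr; apply: bracket => // y; rewrite distrC; exact: bd.
- exact: bracket.
Qed.
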